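(* Let $d\ge2$, $q\ge2$, $n\ge1$, let $p\in\mathbb{Z}/q\mathbb{Z}$ with $\gcd(p,q)=1$ and let $p^*$ be the inverse of $p$ in $\mathbb{Z}/q\mathbb{Z}$. For $1\le i\le n$ let $\mathcal{O}_i$ be the $\sigma_d$-orbit of a point $t_i\in\mathbb{T}$ with $|\mathcal{O}_i|=q$, where the orbits $\mathcal{O}_1,\dots,\mathcal{O}_n$ are pairwise distinct and $t_1<t_2<\dots<t_n$. Write $t_i=(a^{(i)}_0,a^{(i)}_1,\dots,a^{(i)}_{q-1})$ in $q$-tuple notation. Let $A=\bigcup_{i=1}^n\mathcal{O}_i$, listed as $A=\{u_0<u_1<\dots<u_{nq-1}\}$ with indices in $\mathbb{Z}/nq\mathbb{Z}$. Then the following are equivalent: (a) each $t_i$ is the least element of $\mathcal{O}_i$, and $A$ is $\sigma_d$-rotational with $\sigma_d(u_j)=u_{j+np}$ for all $j$ (i.e. $A$ has rotation number $np/nq=p/q$); (b) the sequence of length $nq$ $$a^{(1)}_0,a^{(2)}_0,\dots,a^{(n)}_0,\ a^{(1)}_{p^*},a^{(2)}_{p^*},\dots,a^{(n)}_{p^*},\ a^{(1)}_{2p^*},\dots,a^{(n)}_{2p^*},\ \dots,\ a^{(1)}_{(q-1)p^*},\dots,a^{(n)}_{(q-1)p^*}$$ (i.e. the terms $a^{(i)}_{kp^*}$ ordered first by $k=0,1,\dots,q-1$ and then by $i=1,\dots,n$) is nondecreasing, and moreover $a^{(n)}_{-(p+1)p^*}<a^{(1)}_{-pp^*}$.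
   Context: $\mathbb{T}=\mathbb{R}/\mathbb{Z}$, totally ordered by choosing representatives in $[0,1)$; $\sigma_d(t)=dt$. A finite set $A=\{u_0<\dots<u_{N-1}\}\subset\mathbb{T}$ (indices in $\mathbb{Z}/N\mathbb{Z}$) is $\sigma_d$-rotational if for some fixed $0\ne P\in\mathbb{Z}/N\mathbb{Z}$, $\sigma_d(u_j)=u_{j+P}$ for all $j$; its rotation number is $P/N$. $q$-tuple notation: for digits $a_i\in\{0,\dots,d-1\}$, $(a_0,\dots,a_{q-1})$ denotes the point of $\mathbb{T}$ with purely periodic base-$d$ expansion $0.\overline{a_0a_1\dots a_{q-1}}$, with digit indices read in $\mathbb{Z}/q\mathbb{Z}$ (so every point of period $q$ under $\sigma_d$ has such a representation). Index expressions such as $kp^*$, $-(p+1)p^*$, $-pp^*$ are computed in $\mathbb{Z}/q\mathbb{Z}$. *)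

(* Defs.v *)
From mathcomp Require Import all_boot all_order all_algebra.
From mathcomp Require Import all_classical all_reals.
Set Implicit Arguments. Unset Strict Implicit. Unset Printing Implicit Defensive.
Import Order.TTheory GRing.Theory Num.Theory.
Local Open Scope ring_scope.
Local Open Scope classical_set_scope.

(* The circle T = R/Z is represented by representatives in [0,1). *)
Definition frac {R : realType} (x : R) : R := x - (Num.floor x)%:~R.

Definition sigma {R : realType} (d : nat) (t : R) : R := frac (d%:R * t).

Definition sorbit {R : realType} (d : nat) (t : R) : set R :=
  [set iter k (sigma d) t | k in [set: nat]].

(* q-tuple notation: the point 0.\overline{a_0 a_1 ... a_{q-1}} in base d,
   i.e. (sum_{k<q} a_k d^(q-1-k)) / (d^q - 1). *)
Definition qtuple {R : realType} (d q : nat) (a : nat -> nat) : R :=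
  (\sum_(k < q) (a k)%:R * (d%:R ^+ (q - 1 - k)%N)) / (d%:R ^+ q - 1).

(* Main.v *)
Require Import Defs.
From mathcomp Require Import all_boot all_order all_algebra.
From mathcomp Require Import all_classical all_reals.
From mathcomp Require Import zify ring lra.
Import Order.TTheory GRing.Theory Num.Theory.
Local Open Scope ring_scope.
Local Open Scope classical_set_scope.


Lemma frac_natD (R : realType) (k : nat) (y : R) : 0 <= y < 1 -> Defs.frac (k%:R + y) = y.
Proof.
move=> /andP[y0 y1]; rewrite /Defs.frac.
have -> : Num.floor (k%:R + y) = k%:Z.
  apply: floor_def; rewrite intrD /= -!natz.
  apply/andP; split; lra.
rewrite -natz; lra.
Qed.

Lemma modAnB (n q A B : nat) : (B < n)%N -> (0 < q)%N ->
  ((A * n + B) %% (n * q) = (A %% q) * n + B)%N.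
Proof.
move=> Bn q0.
rewrite {1}(divn_eq A q) mulnDl -mulnA [(q * n)%N]mulnC -addnA modnMDl.
apply: modn_small.
have : (A %% q < q)%N by rewrite ltn_mod.
move=> h. nia.
Qed.

Lemma divAnB (n A B : nat) : (B < n)%N -> ((A * n + B) %/ n = A)%N.
Proof. move=> Bn; rewrite divnMDl ?divn_small ?addn0 //; lia. Qed.

Lemma modnAnB (n A B : nat) : (B < n)%N -> ((A * n + B) %% n = B)%N.
Proof. by move=> Bn; rewrite modnMDl modn_small. Qed.

Lemma negmod (q x y : nat) : (0 < q)%N -> ((x + y) %% q = 0)%N ->
  (x %% q = (q - y %% q) %% q)%N.
Proof.
move=> q0 h.
have hx : (x %% q < q)%N by rewrite ltn_mod.
have hy : (y %% q < q)%N by rewrite ltn_mod.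
have : ((x %% q + y %% q) %% q = 0)%N by rewrite modnDm.
case: (posnP (y %% q)) => [y0|yp].
  rewrite y0 addn0 modn_mod => ->; by rewrite subn0 modnn.
have hs1 : (0 < x %% q + y %% q)%N by lia.
have hs2 : (x %% q + y %% q < 2 * q)%N by lia.
move=> hm.
have e := divn_eq (x %% q + y %% q) q.
rewrite hm addn0 in e.
have hk : ((x %% q + y %% q) %/ q = 1)%N.
  set k := ((x %% q + y %% q) %/ q)%N in e *.
  nia.
rewrite hk mul1n in e.
have -> : (q - y %% q = x %% q)%N by lia.
by rewrite modn_mod.
Qed.


Lemma grow (R : realType) (D : R) (g : nat -> R) : 0 <= D ->
  (forall j, g j.+1 <= D * g j) -> forall a k, g (a + k)%N <= D ^+ k * g a.
Proof.
move=> D0 h a; elim=> [|k IH]; first by rewrite addn0 expr0 mul1r.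
rewrite addnS (le_trans (h _)) // exprS -mulrA ler_wpM2l //.
Qed.

Definition Qt (R : realType) (d q : nat) (c : nat -> nat) (r : nat) : R :=
  qtuple d q (fun k => c ((k + r) %% q)%N).

Lemma geom (R : realType) (d : nat) (q : nat) :
  \sum_(k < q) (d%:R - 1) * (d%:R ^+ (q - 1 - k)%N) = d%:R ^+ q - 1 :> R.
Proof.
elim: q => [|q IH]; first by rewrite big_ord0 expr0 subrr.
rewrite big_ord_recl /= subn0 subn1 /=.
under eq_bigr => k _ do rewrite /bump /= subnDA.
rewrite IH exprS; ring.
Qed.

Lemma Qt_mod (R : realType) d q c r : (0 < q)%N -> Qt R d q c (r %% q) = Qt R d q c r.
Proof.
move=> q0; rewrite /Qt /qtuple; congr (_ / _); apply: eq_bigr => k _.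
by rewrite modnDmr.
Qed.

Lemma Qt_rng (R : realType) d q c r : (2 <= d)%N -> (0 < q)%N ->
  (forall k, (k < q)%N -> (c k < d)%N) -> 0 <= Qt R d q c r <= 1.
Proof.
move=> d2 q0 hc.
have M0 : 0 < d%:R ^+ q - 1 :> R.
  rewrite subr_gt0 exprn_egt1 //; first by rewrite -lt0n.
  by rewrite ltr1n.
rewrite /Qt /qtuple; apply/andP; split.
  apply: divr_ge0; last exact: ltW.
  by apply: sumr_ge0 => k _; apply: mulr_ge0; rewrite ?ler0n ?exprn_ge0 ?ler0n.
rewrite ler_pdivrMr // mul1r -(geom R d q).
apply: ler_sum => k _; apply: ler_wpM2r; first by rewrite exprn_ge0 ?ler0n.
have : ((c ((k + r) %% q)%N).+1 <= d)%N by apply: hc; rewrite ltn_mod.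
rewrite -(ler_nat R) -addn1 natrD => h; lra.
Qed.

Lemma Qt_step (R : realType) d q c r : (2 <= d)%N -> (0 < q)%N ->
  d%:R * Qt R d q c r = (c (r %% q)%N)%:R + Qt R d q c r.+1.
Proof.
move=> d2 q0.
have M0 : d%:R ^+ q - 1 != 0 :> R.
  rewrite subr_eq0 eq_sym; apply/negP => /eqP h.
  have : 1 < d%:R ^+ q :> R by rewrite exprn_egt1 ?ltr1n // -lt0n.
  by rewrite -h ltxx.
rewrite /Qt /qtuple.
case: q q0 M0 => // q _ M0.
rewrite big_ord_recl big_ord_recr /= subn1 /= subn0.
have e1 : d%:R * \sum_(i < q) (c ((bump 0 i + r) %% q.+1)%N)%:R * d%:R ^+ (q - bump 0 i)
   = \sum_(i < q) (c ((i + r.+1) %% q.+1)%N)%:R * d%:R ^+ (q - i) :> R.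
  rewrite mulr_sumr; apply: eq_bigr => i _.
  rewrite /bump /= add1n addSnnS.
  have -> : (q - i = (q - i.+1).+1)%N by have := ltn_ord i; lia.
  rewrite exprS; ring.
have e2 : ((q + r.+1) %% q.+1 = r %% q.+1)%N by rewrite -addSnnS modnDl.
rewrite e2 subnn expr0 add0n mulrA mulrDr mulrA e1.
move: M0; rewrite exprS => M0.
field.
by rewrite M0.
Qed.

Lemma Qt_qmul (R : realType) d q c m : (0 < q)%N -> Qt R d q c (q * m) = Qt R d q c 0.
Proof. by move=> q0; rewrite -Qt_mod // -[in RHS]Qt_mod // modnMr mod0n. Qed.

Lemma Qt_lt1 (R : realType) d q c : (2 <= d)%N -> (0 < q)%N ->
  (forall k, (k < q)%N -> (c k < d)%N) -> Qt R d q c 0 < 1 ->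
  forall r, Qt R d q c r < 1.
Proof.
move=> d2 q0 hc h0 r.
pose E j := 1 - Qt R d q c j.
have hE : forall j, E j.+1 <= d%:R * E j.
  move=> j; rewrite /E mulrBr mulr1 Qt_step //.
  have : ((c (j %% q)%N).+1 <= d)%N by apply: hc; rewrite ltn_mod.
  rewrite -(ler_nat R) -addn1 natrD => h; lra.
have := @grow R _ _ (ler0n R d) hE r (q * r.+1 - r).
have -> : (r + (q * r.+1 - r) = q * r.+1)%N by nia.
rewrite /E Qt_qmul // => h.
have E0 : 0 < 1 - Qt R d q c 0 by lra.
have := lt_le_trans E0 h.
rewrite pmulr_rgt0 ?subr_gt0 //.
by rewrite exprn_gt0 // ltr0n; lia.
Qed.

Lemma Qt_iter (R : realType) d q c : (2 <= d)%N -> (0 < q)%N ->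
  (forall k, (k < q)%N -> (c k < d)%N) -> Qt R d q c 0 < 1 ->
  forall r, iter r (sigma d) (Qt R d q c 0) = Qt R d q c r.
Proof.
move=> d2 q0 hc h0; elim=> [|r IH] //=.
rewrite IH /sigma Qt_step // frac_natD //.
have := @Qt_rng R d q c r.+1 d2 q0 hc; have := @Qt_lt1 R d q c d2 q0 hc h0 r.+1.
move=> h1 /andP[h2 _]; by rewrite h2 h1.
Qed.


Lemma uniq_enum (R : realType) (u v : nat -> R) (N : nat) :
  (forall j k, (j < k < N)%N -> u j < u k) ->
  (forall j k, (j < k < N)%N -> v j < v k) ->
  (forall j, (j < N)%N -> exists2 k, (k < N)%N & v k = u j) ->
  (forall j, (j < N)%N -> exists2 k, (k < N)%N & u k = v j) ->
  forall m, (m < N)%N -> u m = v m.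
Proof.
move=> hu hv huv hvu m; elim/ltn_ind: m => m IH mN.
have [k kN ek] := huv m mN.
case: (ltngtP k m) => [km|mk|e]; last by rewrite -ek e.
- have := hu k m; rewrite km mN => /(_ isT); rewrite (IH k km (ltn_trans km mN)) ek ltxx //.
- have [k' k'N ek'] := hvu m mN.
  case: (ltngtP k' m) => [k'm|mk'|e]; last by rewrite -ek' e.
  + have := hv k' m; rewrite k'm mN => /(_ isT).
    by rewrite -(IH k' k'm (ltn_trans k'm mN)) ek' ltxx.
  + have h1 := hu m k'; rewrite mk' k'N in h1.
    have h2 := hv m k; rewrite mk kN in h2.
    have := h1 isT; have := h2 isT; rewrite ek ek'. move=> a b.
    have := lt_trans a b; by rewrite ltxx.
Qed.

Lemma chain_lt (R : realType) (v : nat -> R) (N : nat) :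
  (forall m, (m.+1 < N)%N -> v m < v m.+1) ->
  forall j k, (j < k < N)%N -> v j < v k.
Proof.
move=> h j k /andP[jk kN].
elim: k jk kN => // k IH; rewrite ltnS leq_eqVlt => /orP[/eqP -> //|jk] kN.
  by apply: h.
apply: lt_trans (IH jk (ltnW kN)) (h _ kN).
Qed.

Lemma WA (R : realType) (D : R) (g : nat -> R) (q : nat) : 1 < D ^+ q -> 0 <= D ->
  (forall j, g j.+1 <= D * g j) -> g q = g 0%N -> 0 <= g 0%N.
Proof.
move=> hD D0 h hq.
have := @grow R D g D0 h 0 q; rewrite add0n hq => hle.
have : 0 <= (D ^+ q - 1) * g 0%N by rewrite mulrBl mul1r subr_ge0.
by rewrite pmulr_rge0 // subr_gt0.
Qed.

Lemma WB (R : realType) (D : R) (g : nat -> R) (J : nat) : 0 <= D ->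
  (forall j, (j < J)%N -> g j.+1 <= D * g j) -> 0 < g J -> 0 < g 0%N.
Proof.
move=> D0 h gJ.
have : forall k, (k <= J)%N -> 0 < g (J - k)%N.
  elim=> [|k IH] kJ; first by rewrite subn0.
  have := IH (ltnW kJ).
  have e : (J - k = (J - k.+1).+1)%N by lia.
  rewrite e => hp.
  have h2 := h (J - k.+1)%N (ltac:(lia)).
  have := lt_le_trans hp h2 => h3; nra.
move=> /(_ J (leqnn J)); by rewrite subnn.
Qed.

Lemma idx_lt (n q Y B : nat) : (Y < q)%N -> (B < n)%N -> (Y * n + B < n * q)%N.
Proof.
move=> hY hB; apply: (@leq_trans (Y.+1 * n)%N).
  rewrite mulSn; lia.
by rewrite mulnC leq_mul2l hY orbT.
Qed.

Lemma digit_mono (R : realType) (D x1 x2 e1 e2 : R) (s1 s2 : nat) : 0 < D -> x1 < x2 ->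
  D * x1 = s1%:R + e1 -> D * x2 = s2%:R + e2 -> 0 <= e1 < 1 -> 0 <= e2 < 1 -> (s1 <= s2)%N.
Proof.
move=> D0 hx h1 h2 /andP[r1 r2] /andP[r3 r4].
rewrite leqNgt; apply/negP => hgt.
move: hgt; rewrite -addn1 -(ler_nat R) natrD => hgt.
nra.
Qed.

Lemma digit_final (R : realType) (D x1 x2 y1 y2 : R) (s : nat) : 0 < D -> x1 < x2 ->
  D * x1 = s%:R + y1 -> D * x2 = s%:R + y2 -> y2 < y1 -> False.
Proof. move=> D0 hx h1 h2 hy; nra. Qed.

Lemma succ_idx (n Y : nat) : (0 < n)%N -> ((Y * n + (n - 1)).+1 = Y.+1 * n + 0)%N.
Proof. by move=> n1; rewrite mulSnr addn0 -addnS subn1 prednK. Qed.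

Local Open Scope card_scope.

Theorem theorem3p1 (R : realType) (d q n p ps : nat)
  (t : nat -> R) (a : nat -> nat -> nat) (u : nat -> R) :
  (2 <= d)%N -> (2 <= q)%N -> (1 <= n)%N ->
  (p < q)%N -> coprime p q -> (p * ps %% q = 1 %% q)%N ->
  (* t_i in T, represented in [0,1) *)
  (forall i, (i < n)%N -> 0 <= t i < 1) ->
  (* |O_i| = q *)
  (forall i, (i < n)%N -> sorbit d (t i) #= `I_q) ->
  (* orbits pairwise distinct *)
  (forall i j, (i < j < n)%N -> sorbit d (t i) <> sorbit d (t j)) ->
  (* t_1 < t_2 < ... < t_n *)
  (forall i, (i.+1 < n)%N -> t i < t i.+1) ->
  (* q-tuple notation t_i = (a^(i)_0, ..., a^(i)_{q-1}) *)
  (forall i k, (i < n)%N -> (k < q)%N -> (a i k < d)%N) ->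
  (forall i, (i < n)%N -> t i = qtuple d q (a i)) ->
  (* A = union of the orbits, listed increasingly as u_0 < ... < u_{nq-1} *)
  (forall j k, (j < k < n * q)%N -> u j < u k) ->
  [set u j | j in `I_(n * q)] =
    [set x | exists2 i, (i < n)%N & sorbit d (t i) x] ->
  ( ((forall i, (i < n)%N -> forall x, sorbit d (t i) x -> t i <= x) /\
     (forall j, (j < n * q)%N -> sigma d (u j) = u ((j + n * p) %% (n * q))%N))
    <->
    ((forall m, (m.+1 < n * q)%N ->
        (a (m %% n) (((m %/ n) * ps) %% q) <= a (m.+1 %% n) (((m.+1 %/ n) * ps) %% q))%N)
     /\
     (a (n - 1) ((q - ((p + 1) * ps) %% q) %% q) < a 0 ((q - (p * ps) %% q) %% q))%N) ).
Proof.
move=> d2 q2 n1 pq cop pps ht hcard hdist hinc hdig htq hu himg.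
have q0 : (0 < q)%N by lia.
have p0 : (0 < p)%N.
  case: p pq cop pps => // _ _; rewrite mul0n mod0n modn_small //.
have hinv : forall X, (X * ps * p %% q = X %% q)%N.
  move=> X; rewrite -mulnA [(ps * p)%N]mulnC -modnMmr pps modnMmr muln1 //.
have hinv2 : forall X, (X * p * ps %% q = X %% q)%N.
  move=> X; rewrite -mulnA -modnMmr pps modnMmr muln1 //.
pose P i r := iter r (sigma d) (t i).
have HP : forall i, (i < n)%N -> forall r, P i r = Qt R d q (a i) r.
  move=> i ilt r.
  have e0 : t i = Qt R d q (a i) 0.
    rewrite htq // /Qt /qtuple; congr (_ / _); apply: eq_bigr => k _.
    by rewrite addn0 modn_small.
  rewrite /P e0; apply: Qt_iter => //; first by move=> k; apply: hdig.
  by rewrite -e0; case/andP: (ht i ilt).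
have Hstep : forall i, (i < n)%N -> forall r,
    d%:R * P i r = (a i (r %% q)%N)%:R + P i r.+1.
  by move=> i ilt r; rewrite !HP // Qt_step.
have Hmod : forall i, (i < n)%N -> forall r, P i (r %% q)%N = P i r.
  by move=> i ilt r; rewrite !HP // Qt_mod.
have Hrng : forall i, (i < n)%N -> forall r, 0 <= P i r < 1.
  move=> i ilt r; rewrite HP //.
  have := @Qt_rng R d q (a i) r d2 q0 (fun k => hdig i k ilt).
  case/andP => -> _ /=.
  apply: Qt_lt1 => //; first by move=> k; apply: hdig.
  rewrite -(HP i ilt 0); case/andP: (ht i ilt) => //.
have HPS : forall i r, sigma d (P i r) = P i r.+1 by [].
have HPD : forall i r k, P i (r + k)%N = iter k (sigma d) (P i r).
  by move=> i r k; rewrite /P addnC iterD.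
pose V i y := P i (y * ps)%N.
pose S i y := a i ((y * ps) %% q)%N.
have HVp : forall i, (i < n)%N -> forall y, V i (y + p)%N = P i (y * ps).+1.
  move=> i ilt y; rewrite /V -Hmod // -[in RHS]Hmod //.
  by rewrite mulnDl -modnDmr pps modnDmr addn1.
have HV : forall i, (i < n)%N -> forall y,
    d%:R * V i y = (S i y)%:R + V i (y + p)%N.
  by move=> i ilt y; rewrite HVp // /V Hstep.
have HVmod : forall i, (i < n)%N -> forall y, V i (y %% q)%N = V i y.
  by move=> i ilt y; rewrite /V -Hmod // modnMml Hmod.
have HSmod : forall i y, S i (y %% q)%N = S i y.
  by move=> i y; rewrite /S modnMml.
have HVP : forall i, (i < n)%N -> forall r, P i r = V i ((r * p) %% q)%N.
  by move=> i ilt r; rewrite /V -[in RHS]Hmod // modnMml hinv2 Hmod.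
pose v m := V (m %% n)%N (m %/ n)%N.
pose s m := S (m %% n)%N (m %/ n)%N.
have Hvm : forall i y, (i < n)%N -> v (y * n + i)%N = V i y.
  by move=> i y ilt; rewrite /v modnAnB // divAnB.
have Hsm : forall i y, (i < n)%N -> s (y * n + i)%N = S i y.
  by move=> i y ilt; rewrite /s modnAnB // divAnB.
have hmn : forall m, (m %% n < n)%N by move=> m; rewrite ltn_mod; lia.
have Hsv : forall m, d%:R * v m = (s m)%:R + P (m %% n)%N (m %/ n * ps).+1.
  by move=> m; rewrite /v /V Hstep.
have Hvr : forall m, 0 <= v m < 1 by move=> m; apply: Hrng.
have hidx1 : (((q - p - 1) * ps) %% q = (q - ((p + 1) * ps) %% q) %% q)%N.
  apply: negmod => //; rewrite -mulnDl.
  have -> : (q - p - 1 + (p + 1) = q)%N by lia.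
  by rewrite modnMr.
have hidx2 : (((q - p) * ps) %% q = (q - (p * ps) %% q) %% q)%N.
  apply: negmod => //; rewrite -mulnDl.
  have -> : (q - p + p = q)%N by lia.
  by rewrite modnMr.
have Hstrict : (a (n - 1) ((q - ((p + 1) * ps) %% q) %% q) < a 0 ((q - (p * ps) %% q) %% q))%N
    = (S (n - 1)%N (q - p - 1)%N < S 0%N (q - p)%N)%N.
  by rewrite /S hidx1 hidx2.
rewrite Hstrict.
have himgP : forall j, (j < n * q)%N -> exists2 i, (i < n)%N & exists r, u j = P i r.
  move=> j jlt.
  have : [set u j | j in `I_(n * q)] (u j) by exists j.
  rewrite himg => -[i ilt [r _ e]]; exists i => //; by exists r.
have hinP : forall i, (i < n)%N -> forall r, exists2 j, (j < n * q)%N & u j = P i r.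
  move=> i ilt r.
  have : [set x | exists2 i, (i < n)%N & sorbit d (t i) x] (P i r).
    by exists i => //; exists r.
  rewrite -himg => -[j jlt e]; by exists j.
have horb : forall i j r r', (i < n)%N -> (j < n)%N -> P i r = P j r' ->
    sorbit d (t i) `<=` sorbit d (t j).
  move=> i j r r' ilt jlt e x [k _ <-].
  exists (r' + (k + q * r - r))%N => //.
  rewrite -/(P j _) HPD -e -HPD.
  have hqr : (r <= q * r)%N by rewrite leq_pmull.
  have -> : (r + (k + q * r - r) = k + q * r)%N.
    by rewrite addnC subnK // (leq_trans hqr) // leq_addl.
  by rewrite -Hmod // [(k + q * r)%N]addnC [(q * r)%N]mulnC modnMDl Hmod.
have hn1 : (n - 1 < n)%N by clear -n1; lia.
have hd1 : (1 : R) < d%:R ^+ q by rewrite exprn_egt1 ?ltr1n // -lt0n.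
have hd0 : (0 : R) < d%:R by rewrite ltr0n (leq_trans _ d2).
have nq0 : (0 < n * q)%N by rewrite muln_gt0 n1 q0.
split=> [[hleast hrot]|[hmono hS3]].
  have hiter : forall r j, (j < n * q)%N ->
      iter r (sigma d) (u j) = u ((j + r * (n * p)) %% (n * q))%N.
    elim=> [|r IH] j jlt; first by rewrite mul0n addn0 modn_small.
    rewrite iterS IH // hrot; last by rewrite ltn_mod.
    by rewrite modnDml mulSnr addnA.
  have hc : forall i, (i < n)%N -> t i = u i.
    have hex : forall i, exists c, (i < n)%N -> (c < n * q)%N /\ t i = u c.
      move=> i; case: (ltnP i n) => ilt; last by exists 0%N.
      have [c clt e] := hinP i ilt 0%N.
      by exists c => _; split.
    have [c hcP] := choice hex.
    have hcn : forall i, (i < n)%N -> (c i < n)%N.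
      move=> i ilt; have [clt e] := hcP i ilt.
      have hK : (c i %/ n < q)%N by rewrite ltn_divLR // mulnC.
      move: (c i %/ n)%N (divn_eq (c i) n) hK => K eK hK.
      pose r := ((q - K) * ps)%N.
      have hPr : P i r = u (c i %% n)%N.
        rewrite /P e hiter //; congr u.
        rewrite {1}eK.
        have -> : (K * n + c i %% n + r * (n * p) = (K + r * p) * n + c i %% n)%N.
          by rewrite mulnDl addnAC [(n * p)%N]mulnC mulnA.
        rewrite modAnB // ?hmn //.
        have -> : ((K + r * p) %% q = 0)%N.
          by rewrite -modnDmr /r hinv modnDmr subnKC ?modnn // ltnW.
        by rewrite mul0n add0n.
      have hle : t i <= P i r by apply: hleast => //; exists r.
      rewrite hPr e in hle.
      have hle' : (c i <= c i %% n)%N.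
        rewrite leqNgt; apply/negP => hlt.
        have := hu (c i %% n)%N (c i); rewrite hlt clt => /(_ isT) h.
        by move: hle; rewrite leNgt h.
      exact: leq_ltn_trans hle' (hmn _).
    have hcinc : forall i, (i.+1 < n)%N -> (c i < c i.+1)%N.
      move=> i iln; have [h1 e1] := hcP i (ltnW iln); have [h2 e2] := hcP i.+1 iln.
      have := hinc i iln; rewrite e1 e2 => h.
      rewrite ltnNge; apply/negP; rewrite leq_eqVlt => /orP[/eqP E|lt].
        by rewrite E ltxx in h.
      have := hu (c i.+1) (c i); rewrite lt h1 => /(_ isT) h'.
      by have := lt_trans h h'; rewrite ltxx.
    have hge : forall k i, (i + k < n)%N -> (c i + k <= c (i + k))%N.
      elim=> [|k IH] i h; first by rewrite !addn0.
      have h' : ((i + k).+1 < n)%N by rewrite -addnS.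
      have h1 := IH i (ltnW h').
      have h2 := hcinc (i + k)%N h'.
      rewrite !addnS; clear -h1 h2; lia.
    move=> i ilt; have [_ e] := hcP i ilt; rewrite e; congr u.
    have h1 := hge i 0%N ilt.
    have hh : (i + (n - 1 - i) < n)%N by clear -ilt; lia.
    have h2 := hge (n - 1 - i)%N i hh.
    have h3 := hcn (i + (n - 1 - i))%N hh.
    rewrite add0n in h1; clear -h1 h2 h3 ilt; lia.
  have huv : forall m, (m < n * q)%N -> u m = v m.
    move=> m mlt.
    have hy : (m %/ n < q)%N by rewrite ltn_divLR // mulnC.
    rewrite (divn_eq m n); move: (m %/ n)%N (m %% n)%N (hmn m) hy => y i ilt hy.
    rewrite Hvm // /V /P hc // hiter; last by apply: (leq_trans ilt); rewrite leq_pmulr.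
    congr u.
    have -> : (i + y * ps * (n * p) = (y * ps * p) * n + i)%N.
      by rewrite addnC [(n * p)%N]mulnC mulnA.
    by rewrite modAnB // hinv modn_small.
  have hsle : forall m, (m.+1 < n * q)%N -> (s m <= s m.+1)%N.
    move=> m hm.
    have hlt : v m < v m.+1.
      rewrite -!huv //; last exact: ltn_trans hm.
      by apply: hu; rewrite ltnSn hm.
    have h1 := Hsv m; have h2 := Hsv m.+1.
    exact: (@digit_mono R _ _ _ _ _ _ _ hd0 hlt h1 h2 (Hrng _ (hmn m) _) (Hrng _ (hmn m.+1) _)).
  split; first by move=> m hm; exact: hsle m hm.
  have hqp : (q - p < q)%N by clear -p0 pq; lia.
  have hle := hsle ((q - p - 1) * n + (n - 1))%N.
  have e1 : (((q - p - 1) * n + (n - 1)).+1 = (q - p) * n + 0)%N.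
    rewrite succ_idx //.
    have -> : ((q - p - 1).+1 = q - p)%N by clear -pq p0; lia.
    by [].
  rewrite e1 !Hsm // in hle.
  have hle' := hle (@idx_lt _ _ _ _ hqp n1).
  rewrite ltn_neqAle hle' andbT; apply/negP => /eqP E.
  have h1 := HV (n - 1)%N hn1 (q - p - 1)%N.
  have h2 := HV 0%N n1 (q - p)%N.
  rewrite E in h1.
  have ea : (q - p - 1 + p = q - 1)%N by clear -pq p0; lia.
  have eb : (q - p + p = q)%N by clear -pq; lia.
  rewrite ea in h1; rewrite eb in h2.
  have hV0 : V 0%N q = V 0%N 0%N by rewrite -HVmod // modnn.
  rewrite hV0 in h2.
  have hidx : ((q - 1) * n + (n - 1) < n * q)%N by apply: idx_lt => //; clear -q0; lia.
  have hpos : (0 < (q - 1) * n + (n - 1))%N by rewrite addn_gt0 muln_gt0 subn_gt0 q2 n1.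
  have hv0 : v (0 * n + 0)%N = V 0%N 0%N by apply: Hvm.
  have hv1 := Hvm (n - 1)%N (q - 1)%N hn1.
  have hv2 := Hvm (n - 1)%N (q - p - 1)%N hn1.
  have hv3 := Hvm 0%N (q - p)%N n1.
  have hlt1 : u (0 * n + 0)%N < u ((q - 1) * n + (n - 1))%N by apply: hu; rewrite mul0n hpos hidx.
  have hlt2 : u ((q - p - 1) * n + (n - 1))%N < u ((q - p) * n + 0)%N.
    by apply: hu; rewrite -e1 ltnSn /= e1 (@idx_lt _ _ _ _ hqp n1).
  have k2 : ((q - p - 1) * n + (n - 1) < n * q)%N.
    by apply: ltn_trans (ltnSn _) _; rewrite e1 (@idx_lt _ _ _ _ hqp n1).
  have k3 := (@idx_lt _ _ _ _ hqp n1).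
  have k1 : (0 * n + 0 < n * q)%N by rewrite ?mul0n ?add0n.
  rewrite (huv _ k1) (huv _ hidx) in hlt1.
  rewrite (huv _ k2) (huv _ k3) in hlt2.
  rewrite hv0 hv1 in hlt1; rewrite hv2 hv3 in hlt2.
  exact: (@digit_final R _ _ _ _ _ _ hd0 hlt2 h1 h2 hlt1).
have hmono' : forall m, (m.+1 < n * q)%N -> (s m <= s m.+1)%N by exact: hmono.
have hS1 : forall i y, (i.+1 < n)%N -> (S i y <= S i.+1 y)%N.
  move=> i y iln; rewrite -HSmod -[S i.+1 _]HSmod.
  have hyq : (y %% q < q)%N by rewrite ltn_mod.
  have := hmono' ((y %% q) * n + i)%N.
  rewrite -addnS !Hsm //; last exact: ltnW.
  by apply; apply: idx_lt.
have hS2 : forall y, ((y %% q).+1 < q)%N -> (S (n - 1)%N y <= S 0%N y.+1)%N.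
  move=> y hy; rewrite -HSmod -[S 0%N _]HSmod.
  have -> : (y.+1 %% q = (y %% q).+1)%N by rewrite -addn1 -modnDml addn1 modn_small.
  have := hmono' ((y %% q) * n + (n - 1))%N.
  have -> : (((y %% q) * n + (n - 1)).+1 = (y %% q).+1 * n + 0)%N.
    by rewrite mulSn addn0 addnC -addSn subn1 prednK.
  rewrite !Hsm //; by apply; apply: idx_lt.
have hVr : forall i y, (i < n)%N -> 0 <= V i y < 1 by move=> i y ilt; apply: Hrng.
have hvinc : forall m, (m.+1 < n * q)%N -> v m < v m.+1.
  move=> m hm.
  have hi := hmn m.
  have hy : (m %/ n < q)%N by rewrite ltn_divLR // mulnC; apply: ltn_trans hm.
  move: hm; rewrite (divn_eq m n); move: (m %/ n)%N (m %% n)%N hy hi => y i hy hi hm.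
  case: (ltnP i.+1 n) => [iA|iB].
    rewrite -addnS !Hvm //.
    pose g j := V i.+1 (y + j * p)%N - V i (y + j * p)%N.
    have hg : forall j, g j.+1 <= d%:R * g j.
      move=> j; rewrite /g mulrBr !HV //.
      rewrite mulSn [(p + _)%N]addnC addnA.
      have := hS1 i (y + j * p)%N iA; rewrite -(ler_nat R) => h; lra.
    have hgq : g q = g 0%N.
      rewrite /g mul0n addn0 -[V i.+1 (y + q * p)%N]HVmod // -[V i (y + q * p)%N]HVmod //.
      by rewrite [(y + q * p)%N]addnC [(q * p)%N]mulnC modnMDl !HVmod.
    have g0 := @WA _ _ _ _ hd1 (ltW hd0) hg hgq.
    rewrite /g mul0n addn0 subr_ge0 in g0.
    rewrite lt_neqAle g0 andbT.
    apply/negP => /eqP e.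
    apply: (hdist i i.+1); first by rewrite ltnSn iA.
    apply/seteqP; split.
      by apply: (horb i i.+1 (y * ps)%N (y * ps)%N).
    by apply: (horb i.+1 i (y * ps)%N (y * ps)%N).
  have ei : i = (n - 1)%N by clear -iB hi; lia.
  rewrite ei in hm *.
  have e1 : ((y * n + (n - 1)).+1 = y.+1 * n + 0)%N.
    by rewrite mulSnr addn0 -addnS subn1 prednK.
  rewrite e1 in hm *.
  have hy1 : (y.+1 < q)%N by move: hm; rewrite addn0 mulnC ltn_pmul2l.
  rewrite !Hvm //.
  pose Y j := ((y + j * p) %% q)%N.
  have hex : exists j, Y j == (q - 1)%N.
    exists ((q - 1 + (q - y)) * ps)%N; rewrite /Y -modnDmr hinv modnDmr.
    have -> : (y + (q - 1 + (q - y)) = (q - 1) + q)%N by clear -hy; lia.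
    by rewrite modnDr modn_small ?eqxx //; clear -q0; lia.
  case: (ex_minnP hex) => Js hJs hmin.
  have Js0 : (0 < Js)%N.
    rewrite lt0n; apply/eqP => J0; move: hJs; rewrite J0 /Y mul0n addn0 modn_small //.
    by move/eqP; clear -hy1; lia.
  set J := Js.-1.
  have eJ : Js = J.+1 by rewrite prednK.
  have hYJ : (Y J < q)%N by rewrite ltn_mod.
  have hYJ1 : ((Y J + p) %% q = q - 1)%N.
    move/eqP: hJs; rewrite eJ /Y modnDml mulSnr addnA //.
  have hYJv : (Y J = q - p - 1)%N.
    move: (Y J) hYJ hYJ1 => z hz hz1.
    have := divn_eq (z + p) q; rewrite hz1.
    case: ((z + p) %/ q)%N => [|k]; first by clear -pq q0; lia.
    by rewrite mulSn; clear -hz pq q0; lia.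
  pose g j := V 0%N (y.+1 + j * p)%N - V (n - 1)%N (y + j * p)%N.
  have hg : forall j, (j < J)%N -> g j.+1 <= d%:R * g j.
    move=> j jJ.
    have hYj : ~~ (Y j == (q - 1)%N).
      apply/negP => /hmin; rewrite eJ; clear -jJ; lia.
    have hYj' : (((y + j * p) %% q).+1 < q)%N.
      have : ((y + j * p) %% q < q)%N by rewrite ltn_mod.
      move: hYj; rewrite /Y; clear; lia.
    have := hS2 (y + j * p)%N hYj'.
    rewrite -(ler_nat R) -addSn => h.
    rewrite /g mulrBr !HV // mulSn [(p + _)%N]addnC !addnA.
    lra.
  have gJ : 0 < g J.
    have e2 : S 0%N (y.+1 + J * p)%N = S 0%N (q - p)%N.
      rewrite -HSmod -[S 0%N (q - p)%N]HSmod addSn -addn1 -modnDml -/(Y J) hYJv.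
      congr S; congr modn; clear -pq p0; lia.
    have e3 : S (n - 1)%N (y + J * p)%N = S (n - 1)%N (q - p - 1)%N.
      by rewrite -HSmod -/(Y J) hYJv.
    have hlt : ((S (n - 1)%N (q - p - 1)%N).+1 <= S 0%N (q - p)%N)%N := hS3.
    move: hlt; rewrite -(ler_nat R) -addn1 natrD => hlt.
    have := HV 0%N n1 (y.+1 + J * p)%N.
    have := HV (n - 1)%N hn1 (y + J * p)%N.
    rewrite e2 e3 => h1 h2.
    have := hVr 0%N (y.+1 + J * p + p)%N n1.
    have := hVr (n - 1)%N (y + J * p + p)%N hn1.
    have := hVr 0%N (y.+1 + J * p)%N n1.
    have := hVr (n - 1)%N (y + J * p)%N hn1.
    rewrite /g => /andP[? ?] /andP[? ?] /andP[? ?] /andP[? ?].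
    nra.
  have := @WB _ _ _ _ (ltW hd0) hg gJ.
  by rewrite /g mul0n !addn0 subr_gt0.
have hvlt := @chain_lt _ _ _ hvinc.
have huv : forall m, (m < n * q)%N -> u m = v m.
  apply: (@uniq_enum _ _ _ _ hu hvlt).
    move=> j jlt; have [i ilt [r e]] := himgP j jlt.
    exists (((r * p) %% q) * n + i)%N; first by apply: idx_lt; rewrite ?ltn_mod.
    by rewrite Hvm // e HVP.
  move=> j jlt; have [k klt e] := hinP (j %% n)%N (hmn j) (j %/ n * ps)%N.
  by exists k.
split.
  move=> i ilt x [r _ <-].
  rewrite -/(P i r) HVP // -Hvm //.
  have -> : t i = v i by rewrite /v modn_small // divn_small.
  have hm : (((r * p) %% q) * n + i < n * q)%N by apply: idx_lt; rewrite ?ltn_mod.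
  case: (ltngtP i (((r * p) %% q) * n + i)%N) => [h|h|h].
  - by apply/ltW/hvlt; rewrite h hm.
  - by move: h; rewrite ltnNge leq_addl.
  - by rewrite -h.
move=> j jlt.
rewrite !huv //; last by rewrite ltn_mod.
rewrite (divn_eq j n); move: (j %/ n)%N (j %% n)%N (hmn j) => y i ilt.
rewrite Hvm //.
have -> : (y * n + i + n * p = (y + p) * n + i)%N.
  by rewrite mulnDl [(p * n)%N]mulnC addnAC.
by rewrite modAnB // Hvm // HVmod // HVp.
Qed.
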